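(* Let $R$ be a ring and $G$ a $p$-group for some prime $p$ such that the group ring $RG$ is a DT ring and $3\in\Delta(R)$. Then either $G$ is a $3$-group or $G$ is an elementary abelian $2$-group ($g^2=1$ for all $g\in G$).
   Context: All rings are associative with identity; $U(R)$ is the group of units. $\Delta(R)=\{x\in R: x+u\in U(R)\text{ for all }u\in U(R)\}$. $\mathrm{Tr}(R)=\{x\in R: x^3=x\}$. A ring $R$ is a DT ring if every $r\in R$ can be written $r=e+d$ with $e\in\mathrm{Tr}(R)$ and $d\in\Delta(R)$. $RG$ denotes the group ring. *)

(* Defs.v *)
(* Group rings R[G] for an arbitrary (possibly infinite)
   group G are built as finitely supported functions G -> R (finmap's fsfun). *)
From HB Require Import structures.
From mathcomp Require Import all_boot all_order all_algebra.
From mathcomp Require Import finmap.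
Set Implicit Arguments. Unset Strict Implicit. Unset Printing Implicit Defensive.
Import Order.TTheory GRing.Theory Num.Theory.
Local Open Scope fset_scope.
Local Open Scope ring_scope.

Section RingNotions.
Variables (T : Type) (add mul : T -> T -> T) (one : T).

Definition is_unit_op (u : T) : Prop :=
  exists v : T, mul u v = one /\ mul v u = one.

Definition in_Delta_op (x : T) : Prop :=
  forall u : T, is_unit_op u -> is_unit_op (add x u).

Definition is_tripotent_op (x : T) : Prop := mul x (mul x x) = x.

Definition DT_op : Prop :=
  forall r : T, exists e d : T, is_tripotent_op e /\ in_Delta_op d /\ r = add e d.
End RingNotions.

Definition in_Delta (R : nzRingType) (x : R) : Prop :=
  in_Delta_op +%R *%R 1 x.
Definition DT_ring (R : nzRingType) : Prop := DT_op +%R *%R (1 : R).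

Section GroupRing.
Variables (R : nzRingType) (G : groupType).

Definition grpring := {fsfun G -> R with 0}.

Definition gr_add (a b : grpring) : grpring :=
  [fsfun g in finsupp a `|` finsupp b => a g + b g | 0].

Definition gr_one : grpring := [fsfun g in [fset 1%g] => 1 | 0].

(* (a * b)(g) = sum_{h} a(h) b(h^-1 g); this vanishes outside supp(a)supp(b) *)
Definition gr_mul (a b : grpring) : grpring :=
  [fsfun g in [fset (x * y)%g | x in finsupp a, y in finsupp b] =>
     \sum_(h <- finsupp a) a h * b (h^-1 * g)%g | 0].

Definition DT_grpring : Prop := DT_op gr_add gr_mul gr_one.
End GroupRing.

Definition is_pgroup (p : nat) (G : groupType) : Prop :=
  forall g : G, exists n : nat, (g ^+ (p ^ n))%g = 1%g.

Definition elementary_abelian_2group (G : groupType) : Prop :=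
  (forall g h : G, (g * h)%g = (h * g)%g) /\ (forall g : G, (g ^+ 2)%g = 1%g).

(* Main.v *)
Require Import Defs.
From HB Require Import structures.
From mathcomp Require Import all_boot all_order all_algebra.
From mathcomp Require Import finmap zify.
Set Implicit Arguments. Unset Strict Implicit. Unset Printing Implicit Defensive.
Import Order.TTheory GRing.Theory Num.Theory.
Local Open Scope ring_scope.

Section Abstract.
Variable T : nzRingType.
Local Notation U := (@is_unit_op T (@GRing.mul T) (1:T)).
Local Notation D := (@in_Delta_op T (@GRing.add T) (@GRing.mul T) (1:T)).

Lemma U1 : U 1. Proof. by exists 1; rewrite mulr1. Qed.
Lemma UM a b : U a -> U b -> U (a * b).
Proof.
move=> [a' [h1 h2]] [b' [h3 h4]]; exists (b' * a'); split.
  by rewrite mulrA -(mulrA a) h3 mulr1 h1.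
by rewrite mulrA -(mulrA b') h2 mulr1 h4.
Qed.
Lemma UN a : U a -> U (- a).
Proof. by move=> [a' [h1 h2]]; exists (- a'); rewrite !mulrNN; split. Qed.
Lemma D0 : D 0. Proof. by move=> u; rewrite add0r. Qed.
Lemma DD x y : D x -> D y -> D (x + y).
Proof. by move=> hx hy u hu; rewrite -addrA; apply: hx; apply: hy. Qed.
Lemma DN x : D x -> D (- x).
Proof.
move=> hx u hu; have := UN (hx _ (UN hu)).
by rewrite opprD opprK.
Qed.
Lemma DmulU v x : U v -> D x -> D (v * x).
Proof.
move=> [v' [h1 h2]] hx u hu.
have -> : v * x + u = v * (x + v' * u) by rewrite mulrDr mulrA h1 mul1r.
apply: UM; first by exists v'.
by apply: hx; apply: UM => //; exists v.
Qed.
Lemma DmulUr v x : U v -> D x -> D (x * v).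
Proof.
move=> [v' [h1 h2]] hx u hu.
have -> : x * v + u = (x + u * v') * v by rewrite mulrDl -mulrA h2 mulr1.
apply: UM; last by exists v'.
by apply: hx; apply: UM => //; exists v.
Qed.
Lemma idt (a y : T) : a * y + 1 = - (a + y) + (a + 1) * (y + 1).
Proof.
rewrite mulrDl !mulrDr !mulr1 mul1r opprD.
rewrite [X in _ = X]addrC -!addrA; congr (_ + _).
rewrite addrCA; rewrite !addrA.
by rewrite (addrAC y a 1) addrK addrAC subrr add0r.
Qed.

Lemma DM x y : D x -> D y -> D (x * y).
Proof.
move=> hx hy u [u' [h1 h2]].
have hx' : D (u' * x) by apply: DmulU => //; exists u.
have -> : x * y + u = u * ((u' * x) * y + 1).
  by rewrite mulrDr mulr1 !mulrA h1 mul1r.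
apply: UM; first by exists u'.
rewrite idt.
apply: (DN (DD hx' hy)); apply: UM; [exact: hx' _ U1 | exact: hy _ U1].
Qed.

Lemma trip_unit e : e * (e * e) = e -> U e -> e * e = 1.
Proof.
move=> he [v [h1 h2]].
by rewrite -[e * e]mul1r -h2 -mulrA he h2.
Qed.

Lemma DT_sq : DT_op (@GRing.add T) (@GRing.mul T) 1 ->
  forall u, U u -> D (u * u - 1).
Proof.
move=> hDT u hu; have [e [d [he [hd Hu]]]] := hDT u; subst u.
have hue : U e.
  have -> : e = - d + (e + d) by rewrite addrCA addNr addr0.
  by have := DN hd; apply.
have ee := trip_unit he hue.
have -> : (e + d) * (e + d) - 1 = e * d + d * e + d * d.
  by rewrite mulrDl !mulrDr ee addrAC (addrAC 1) subrr add0r addrA.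
by apply: DD; [apply: DD; [apply: DmulU | apply: DmulUr] | apply: DM].
Qed.

Lemma Dpow h : U h -> D (h - 1) -> forall i, D (h ^+ i - 1).
Proof.
move=> hU hD; elim=> [|i IH]; first by rewrite expr0 subrr; exact: D0.
have -> : h ^+ i.+1 - 1 = (h ^+ i - 1) * h + (h - 1).
  by rewrite mulrBl mul1r -exprSr addrA subrK.
by apply: DD => //; apply: DmulUr.
Qed.

Lemma Dsum N (F : 'I_N -> T) : (forall i, D (F i)) -> D (\sum_(i < N) F i).
Proof.
move=> hF; apply: (big_ind D) => //; [exact: D0 | exact: DD].
Qed.

Lemma main_abs : DT_op (@GRing.add T) (@GRing.mul T) 1 ->
  forall u (N : nat), U u -> U (N%:R) -> (u * u) ^+ N = 1 -> u * u = 1.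
Proof.
move=> hDT u N hu hN hpow.
set h := u * u.
have hU : U h by apply: UM.
have hD : D (h - 1) by apply: DT_sq.
set s := \sum_(i < N) h ^+ i.
have hx : D (\sum_(i < N) (h ^+ i - 1)) by apply: Dsum => i; apply: Dpow.
have sE : s = N%:R + \sum_(i < N) (h ^+ i - 1).
  by rewrite sumrB sumr_const card_ord addrC subrK.
have hs : U s.
  rewrite sE; case: hN => v [h1 h2].
  have -> : N%:R + \sum_(i < N) (h ^+ i - 1) = N%:R * (v * \sum_(i < N) (h ^+ i - 1) + 1).
    by rewrite mulrDr mulr1 mulrA h1 mul1r addrC.
  apply: UM; first by exists v.
  by apply: (DmulU _ hx) => //; [exists N%:R | exact: U1].
have hz : s * (h - 1) = 0.
  rewrite mulrBr mulr1 /s mulr_suml.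
  have -> : \sum_(i < N) h ^+ i * h = \sum_(i < N) h ^+ i.+1.
    by apply: eq_bigr => i _; rewrite exprSr.
  rewrite -sumrB -(big_mkord xpredT (fun i => h ^+ i.+1 - h ^+ i)).
  by rewrite telescope_sumr // hpow expr0 subrr.
case: hs => s' [h1 h2].
apply/eqP; rewrite -subr_eq0; apply/eqP.
have : s' * (s * (h - 1)) = 0 by rewrite hz mulr0.
by rewrite mulrA h2 mul1r.
Qed.
End Abstract.
Section Top.
Local Open Scope fset_scope.
Local Open Scope ring_scope.

Lemma sum_shift (R : nzRingType) (G : groupType) (h : G) (B S : {fset G}) (F : G -> R) :
  (forall j, j \in B -> (h * j)%g \in S) ->
  (forall k, k \in S -> (h^-1 * k)%g \notin B -> F k = 0) ->
  \sum_(j <- B) F (h * j)%g = \sum_(k <- S) F k.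
Proof.
move=> hBS hF.
have inj : {in mem B &, injective (fun j => (h * j)%g)}.
  by move=> x y _ _ /mulgI.
rewrite -(@big_imfset _ _ _ _ _ imfset_key _ _ F inj) /=.
apply: big_fset_incl.
  by apply/fsubsetP => k /imfsetP [j /= jB ->]; apply: hBS.
move=> k kS kn; apply: hF => //; apply: contra kn => hk.
by apply/imfsetP; exists (h^-1 * k)%g => //; rewrite mulVKg.
Qed.

Section GR.
Variables (R : nzRingType) (G : groupType).
Local Notation RG := (grpring R G).

Lemma grfunE (S : {fset G}) (F : G -> R) x :
  ([fsfun g in S => F g | 0] : RG) x = if x \in S then F x else 0.
Proof. by rewrite fsfun_fun. Qed.

Lemma grfun_supp (S : {fset G}) (F : G -> R) :
  finsupp ([fsfun g in S => F g | 0] : RG) `<=` S.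
Proof.
apply/fsubsetP => x; rewrite mem_finsupp grfunE.
by case: ifP => //; rewrite eqxx.
Qed.

Lemma gr_dflt (a : RG) x : x \notin finsupp a -> a x = 0.
Proof. exact: fsfun_dflt. Qed.

Lemma gr_addE (a b : RG) x : gr_add a b x = a x + b x.
Proof.
rewrite /gr_add grfunE in_fsetU; case: ifP => // /negbT.
by rewrite negb_or => /andP[ha hb]; rewrite !gr_dflt // addr0.
Qed.

Lemma gr_oneE x : (gr_one R G) x = if x == 1%g then 1 else 0.
Proof. by rewrite /gr_one grfunE in_fset1. Qed.

Lemma gr_mulE (a b : RG) x :
  gr_mul a b x = \sum_(h <- finsupp a) a h * b (h^-1 * x)%g.
Proof.
rewrite /gr_mul grfunE; case: ifP => // /negbT hx.
rewrite big_seq big1 // => h ha; case: (finsuppP b (h^-1 * x)%g) => [|hb].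
  by rewrite mulr0.
case/negP: hx; apply/imfset2P; exists h => //; exists (h^-1 * x)%g => //.
by rewrite mulVKg.
Qed.

Lemma gr_mulE_incl (S : {fset G}) (a b : RG) x : finsupp a `<=` S ->
  gr_mul a b x = \sum_(h <- S) a h * b (h^-1 * x)%g.
Proof.
move=> sub; rewrite gr_mulE (big_fset_incl _ sub) // => h _ ha.
by rewrite gr_dflt // mul0r.
Qed.

Lemma gr_mul_supp (a b : RG) :
  finsupp (gr_mul a b) `<=` [fset (x * y)%g | x in finsupp a, y in finsupp b].
Proof. exact: grfun_supp. Qed.

Lemma gr_add_supp (a b : RG) : finsupp (gr_add a b) `<=` finsupp a `|` finsupp b.
Proof. exact: grfun_supp. Qed.

Lemma gr_mulA (a b c : RG) : gr_mul a (gr_mul b c) = gr_mul (gr_mul a b) c.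
Proof.
apply/fsfunP => x.
rewrite (gr_mulE_incl _ _ (gr_mul_supp a b)) gr_mulE.
set S := [fset (_ * _)%g | _ in _, _ in _].
under [RHS]eq_bigr => k _ do rewrite gr_mulE mulr_suml.
rewrite exchange_big /=; rewrite big_seq [RHS]big_seq; apply: eq_bigr => h hA.
rewrite gr_mulE mulr_sumr.
under [RHS]eq_bigr => k _ do rewrite -mulrA.
rewrite -[in RHS]mulr_sumr -mulr_sumr; apply: (congr1 (GRing.mul (a h))).
rewrite -(@sum_shift R G h (finsupp b) S (fun k => b (h^-1 * k)%g * c (k^-1 * x)%g)).
- by apply: eq_bigr => j _; rewrite mulKg invgM mulgA.
- by move=> j jB; apply/imfset2P; exists h => //; exists j.
- by move=> k _ kB; rewrite gr_dflt // mul0r.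
Qed.

Definition gr_zero : RG := [fsfun g in fset0 => (0 : R) | 0].
Definition gr_opp (a : RG) : RG := [fsfun g in finsupp a => - a g | 0].

Lemma gr_zeroE x : gr_zero x = 0.
Proof. have := @fsfun_fun fsfun_key G R (fun _ => 0) fset0 (fun _ => 0) x. by rewrite in_fset0. Qed.

Lemma gr_oppE (a : RG) x : gr_opp a x = - a x.
Proof.
rewrite /gr_opp grfunE; case: ifP => // /negbT h.
by rewrite gr_dflt // oppr0.
Qed.

Lemma gr_addA : associative (@gr_add R G).
Proof. by move=> a b c; apply/fsfunP => x; rewrite !gr_addE addrA. Qed.
Lemma gr_addC : commutative (@gr_add R G).
Proof. by move=> a b; apply/fsfunP => x; rewrite !gr_addE addrC. Qed.
Lemma gr_add0 : left_id gr_zero (@gr_add R G).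
Proof. by move=> a; apply/fsfunP => x; rewrite !gr_addE gr_zeroE add0r. Qed.
Lemma gr_addN : left_inverse gr_zero gr_opp (@gr_add R G).
Proof. by move=> a; apply/fsfunP => x; rewrite !gr_addE gr_zeroE gr_oppE addNr. Qed.

Lemma gr_mul1 : left_id (gr_one R G) (@gr_mul R G).
Proof.
move=> a; apply/fsfunP => x.
rewrite (gr_mulE_incl _ _ (grfun_supp [fset 1%g] (fun _ => (1:R)))).
by rewrite big_seq_fset1 gr_oneE eqxx mul1r invg1 mul1g.
Qed.

Lemma gr_mulr1 : right_id (gr_one R G) (@gr_mul R G).
Proof.
move=> a; apply/fsfunP => x.
rewrite (gr_mulE_incl _ _ (fsubsetUr [fset x] (finsupp a))).
rewrite (big_fsetD1 x) ?in_fsetU ?in_fset1 ?eqxx //= gr_oneE mulVg eqxx mulr1.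
rewrite big_seq big1 ?addr0 // => h; rewrite !inE => /andP [hx _].
by rewrite gr_oneE mulg_eq1 eqg_inv (negbTE hx) mulr0.
Qed.

Lemma gr_mulDr : right_distributive (@gr_mul R G) (@gr_add R G).
Proof.
move=> a b c; apply/fsfunP => x.
by rewrite gr_addE !gr_mulE -big_split /=; apply: eq_bigr => h _; rewrite gr_addE mulrDr.
Qed.

Lemma gr_mulDl : left_distributive (@gr_mul R G) (@gr_add R G).
Proof.
move=> a b c; apply/fsfunP => x.
rewrite gr_addE (gr_mulE_incl _ _ (gr_add_supp a b)).
rewrite (gr_mulE_incl _ _ (fsubsetUl (finsupp a) (finsupp b))).
rewrite (gr_mulE_incl _ _ (fsubsetUr (finsupp a) (finsupp b))).
by rewrite -big_split /=; apply: eq_bigr => h _; rewrite gr_addE mulrDl.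
Qed.

Lemma gr_one_neq0 : gr_one R G != gr_zero.
Proof.
apply/eqP => /fsfunP /(_ 1%g); rewrite gr_oneE gr_zeroE eqxx => /eqP.
by rewrite oner_eq0.
Qed.
End GR.

Section Inst.
Variables (R : nzRingType) (G : groupType).
Definition GRT := grpring R G.
HB.instance Definition _ := Choice.copy GRT (grpring R G).
HB.instance Definition _ := GRing.isZmodule.Build GRT
  (@gr_addA R G) (@gr_addC R G) (@gr_add0 R G) (@gr_addN R G).
HB.instance Definition _ := GRing.Zmodule_isNzRing.Build GRT
  (@gr_mulA R G) (@gr_mul1 R G) (@gr_mulr1 R G) (@gr_mulDl R G) (@gr_mulDr R G)
  (@gr_one_neq0 R G).

Lemma DT_GRT : DT_grpring R G -> DT_op (@GRing.add GRT) (@GRing.mul GRT) 1.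
Proof. exact. Qed.
End Inst.

End Top.

Section Final.
Local Open Scope fset_scope.
Local Open Scope ring_scope.
Variables (R : nzRingType) (G : groupType).
Local Notation T := (GRT R G).
Local Notation U := (@is_unit_op T (@GRing.mul T) (1:T)).

Definition delta (g : G) : T := [fsfun x in [fset g] => (1 : R) | 0].
Definition iota (r : R) : T := [fsfun x in [fset 1%g] => r | 0].

Lemma deltaE g x : delta g x = if x == g then 1 else 0.
Proof. by rewrite /delta grfunE in_fset1. Qed.
Lemma iotaE r x : iota r x = if x == 1%g then r else 0.
Proof. by rewrite /iota grfunE in_fset1. Qed.

Lemma eq_mulV (a x b : G) : ((a^-1 * x)%g == b) = (x == (a * b)%g).
Proof. by apply/eqP/eqP => [<-|->]; rewrite ?mulVKg ?mulKg. Qed.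

Lemma deltaM a b : delta a * delta b = delta (a * b)%g.
Proof.
apply/fsfunP => x; rewrite /GRing.mul /=.
rewrite (gr_mulE_incl _ _ (grfun_supp [fset a] (fun _ => (1:R)))).
by rewrite big_seq_fset1 !deltaE eqxx mul1r eq_mulV.
Qed.

Lemma delta1 : delta 1%g = 1. Proof. by []. Qed.

Lemma deltaX g n : delta g ^+ n = delta (g ^+ n)%g.
Proof.
elim: n => [|n IH]; first by rewrite expr0 expg0.
by rewrite exprS IH deltaM expgS.
Qed.

Lemma delta_unit g : U (delta g).
Proof.
by exists (delta g^-1); rewrite !deltaM mulgV mulVg.
Qed.

Lemma iotaM a b : iota a * iota b = iota (a * b).
Proof.
apply/fsfunP => x; rewrite /GRing.mul /=.
rewrite (gr_mulE_incl _ _ (grfun_supp [fset 1%g] (fun _ => a))).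
rewrite big_seq_fset1 !iotaE eqxx invg1 mul1g.
by case: ifP; rewrite ?mulr0.
Qed.

Lemma iotaD a b : iota (a + b) = iota a + iota b.
Proof.
apply/fsfunP => x; rewrite /GRing.add /= gr_addE !iotaE.
by case: ifP; rewrite ?addr0.
Qed.

Lemma iota_nat n : iota n%:R = n%:R.
Proof.
elim: n => [|n IH].
  apply/fsfunP => x; rewrite iotaE /GRing.zero /= gr_zeroE.
  by case: ifP.
by rewrite !mulrS iotaD IH.
Qed.

Lemma iota_unit r : @is_unit_op R (@GRing.mul R) 1 r -> U (iota r).
Proof.
by case=> v [h1 h2]; exists (iota v); rewrite !iotaM ?h1 ?h2.
Qed.

Lemma sq1 (g : G) (N : nat) : DT_grpring R G -> @is_unit_op R (@GRing.mul R) 1 N%:R ->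
  ((g * g) ^+ N)%g = 1%g -> (g * g)%g = 1%g.
Proof.
move=> hDT hN hg.
have hNT : U (N%:R) by rewrite -iota_nat; apply: iota_unit.
have := @main_abs T (DT_GRT hDT) (delta g) N (delta_unit g) hNT.
rewrite !deltaM deltaX hg => /(_ erefl) /fsfunP /(_ (g * g)%g).
rewrite deltaE eqxx /= (deltaE 1%g).
case: eqP => // _ /eqP; by rewrite oner_eq0.
Qed.
End Final.

Section Rside.
Local Open Scope ring_scope.
Variable R : nzRingType.
Local Notation U := (@is_unit_op R (@GRing.mul R) (1:R)).
Local Notation D := (@in_Delta_op R (@GRing.add R) (@GRing.mul R) (1:R)).

Lemma Dnat x n : D x -> D (x *+ n).
Proof.
move=> hx; elim: n => [|n IH]; first by rewrite mulr0n; apply: D0.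
by rewrite mulrS; apply: DD.
Qed.

Lemma Uexp x k : U x -> U (x ^+ k).
Proof.
move=> hx; elim: k => [|k IH]; first by rewrite expr0; apply: U1.
by rewrite exprS; apply: UM.
Qed.

Lemma p_unit p : prime p -> p != 3%N -> D 3%:R -> U p%:R.
Proof.
move=> hp hp3 h3.
have hr0 : (p %% 3 != 0)%N.
  apply/negP => /eqP r0.
  have : (3 %| p)%N by rewrite /dvdn r0.
  by rewrite dvdn_prime2 // eq_sym (negbTE hp3).
have hlt := ltn_pmod p (isT : (0 < 3)%N).
have hE := divn_eq p 3.
case hr : (p %% 3)%N => [|[|[|r]]]; rewrite hr in hr0 hlt hE => //.
- have -> : p%:R = 3%:R *+ (p %/ 3) + 1 :> R.
    by rewrite {1}hE natrD natrM mulr_natl.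
  by apply: (Dnat _ h3); apply: U1.
- have -> : p%:R = 3%:R *+ (p %/ 3).+1 + - 1 :> R.
    move: hE; set q := (p %/ 3)%N => hE.
    have -> : (p = q.+1 * 3 - 1)%N by lia.
    rewrite natrB ?natrM ?mulr_natl //; lia.
  by apply: (Dnat _ h3); apply: UN; apply: U1.
Qed.
End Rside.

Unset Implicit Arguments.
Local Open Scope ring_scope.
Theorem theorem3p11 (R : nzRingType) (G : groupType) (p : nat) :
  prime p -> is_pgroup p G ->
  DT_grpring R G -> in_Delta (3%:R : R) ->
  is_pgroup 3 G \/ elementary_abelian_2group G.
Proof.
move=> hp hpg hDT h3.
case: (eqVneq p 3%N) => [Ep | hp3]; first by left; rewrite -Ep.
right.
have sq : forall g : G, (g * g)%g = 1%g.
  move=> g; case: (hpg (g * g)%g) => k hk.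
  apply: (@sq1 R G g (p ^ k)) hDT _ hk.
  by rewrite natrX; apply: Uexp; apply: p_unit.
have inv : forall x : G, (x^-1)%g = x by move=> x; apply: mulg1_eq (sq x).
split; last by move=> g; rewrite expg2 sq.
by move=> g h; rewrite -[(g * h)%g]inv invgM !inv.
Qed.
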